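(* Let $(\Omega,\mathcal{F},\mathbb{P})$ be a nonatomic probability space and $(\Phi,\Psi)$ an Orlicz pair as in the context. Let $X\in L^\Phi$. Then the net $(\mathbb{E}[X|\pi])_{\pi\in\Pi}$ order converges to $X$ in $L^\Phi$ if and only if $X\in L^\infty$.
   Context: $(\Omega,\mathcal{F},\mathbb{P})$ is a nonatomic probability space. An Orlicz function is a convex, increasing $\Phi:[0,\infty)\to[0,\infty)$ with $\Phi(0)=0$; its conjugate is $\Psi(s)=\sup_{t\ge0}(ts-\Phi(t))$. Standing assumption: $\Phi(t)>0$ for $t>0$ and $\lim_{t\to\infty}\Phi(t)/t=\infty$. $L^\Phi$ is the space (a Banach lattice under the a.s. order) of random variables $X$ (mod a.s. equality) with $\|X\|_\Phi:=\inf\{\lambda>0:\mathbb{E}[\Phi(|X|/\lambda)]\le 1\}<\infty$. $\Pi$ denotes the set of all finite measurable partitions of $\Omega$ whose members all have nonzero probability, directed by refinement; $\mathbb{E}[X|\pi]:=\mathbb{E}[X|\sigma(\pi)]$. A net $(X_\alpha)$ in $L^\Phi$ order converges to $X\in L^\Phi$ if there is a net $(Y_\alpha)$ in $L^\Phi$ (same index set) which is decreasing with infimum $0$ in $L^\Phi$ and satisfies $|X_\alpha-X|\le Y_\alpha$ for all $\alpha$. *)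

(* Defs.v *)
From HB Require Import structures.
From mathcomp Require Import all_boot all_order all_algebra.
From mathcomp Require Import all_classical all_reals.
From mathcomp Require Import topology normedtype sequences numfun measure lebesgue_measure lebesgue_integral probability.
From Stdlib Require List.

Set Implicit Arguments.
Unset Strict Implicit.
Unset Printing Implicit Defensive.

Import Order.TTheory GRing.Theory Num.Theory.
Import numFieldNormedType.Exports.
Local Open Scope classical_set_scope.
Local Open Scope ring_scope.

Section OrliczDefs.
Context {d : measure_display} {T : measurableType d} {R : realType}.

Definition nonatomic (P : probability T R) : Prop :=
  forall A : set T, measurable A -> (0 < P A)%E ->
    exists B : set T, [/\ measurable B, B `<=` A, (0 < P B)%E & (P B < P A)%E].

Definition orlicz_fun (Phi : R -> R) : Prop :=
  [/\ Phi 0 = 0,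
      (forall s t l : R, 0 <= s -> 0 <= t -> 0 <= l <= 1 ->
         Phi (l * s + (1 - l) * t) <= l * Phi s + (1 - l) * Phi t),
      (forall s t : R, 0 <= s -> s <= t -> Phi s <= Phi t),
      (forall t : R, 0 < t -> 0 < Phi t) &
      ((fun t => Phi t / t) @ +oo --> +oo)].

(* X belongs to L^Phi: X is measurable and its Luxemburg norm
   inf {lam > 0 : E[Phi(|X|/lam)] <= 1} is finite, i.e. the set is nonempty. *)
Definition in_LPhi (P : probability T R) (Phi : R -> R) (X : T -> R) : Prop :=
  measurable_fun setT X /\
  exists lam : R, 0 < lam /\
    (\int[P]_x (Phi (`|X x| / lam))%:E <= 1)%E.

Definition in_Linfty (P : probability T R) (X : T -> R) : Prop :=
  measurable_fun setT X /\
  exists M : R, {ae P, forall x, `|X x| <= M}.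

Definition is_partition (P : probability T R) (pi : seq (set T)) : Prop :=
  [/\ (forall A, List.In A pi -> measurable A /\ (0 < P A)%E),
      List.NoDup pi,
      (forall A B, List.In A pi -> List.In B pi -> A <> B -> A `&` B = set0) &
      (forall x : T, exists A, List.In A pi /\ A x)].

(* Refinement: pi' refines pi (pi <= pi' in the direction of Pi). *)
Definition refines (pi pi' : seq (set T)) : Prop :=
  forall B, List.In B pi' -> exists A, List.In A pi /\ B `<=` A.

Definition condexp_part (P : probability T R) (X : T -> R)
    (pi : seq (set T)) : T -> R :=
  fun x => \sum_(A <- pi)
     (fine (\int[P]_(y in A) (X y)%:E) / fine (P A)) * (\1_A x : R).

(* Order convergence in the Banach lattice L^Phi (a.s. order) of a net
   (F i)_{i in Idx} directed by le, to X. *)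
Definition order_conv (P : probability T R) (Phi : R -> R)
    (I : Type) (Idx : I -> Prop) (le : I -> I -> Prop)
    (F : I -> T -> R) (X : T -> R) : Prop :=
  exists Y : I -> T -> R,
    [/\ (forall i, Idx i -> in_LPhi P Phi (Y i)),
        (forall i j, Idx i -> Idx j -> le i j ->
           {ae P, forall x, Y j x <= Y i x}),
        (* infimum 0 in L^Phi: 0 is a lower bound ... *)
        (forall i, Idx i -> {ae P, forall x, 0 <= Y i x}),
        (* ... and the greatest one among elements of L^Phi *)
        (forall Z : T -> R, in_LPhi P Phi Z ->
           (forall i, Idx i -> {ae P, forall x, Z x <= Y i x}) ->
           {ae P, forall x, Z x <= 0}) &
        (forall i, Idx i -> {ae P, forall x, `|F i x - X x| <= Y i x})].

End OrliczDefs.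

(* Main.v *)
Require Import Defs.
From HB Require Import structures.
From mathcomp Require Import all_boot all_order all_algebra.
From mathcomp Require Import all_classical all_reals.
From mathcomp Require Import topology normedtype sequences numfun measure lebesgue_measure lebesgue_integral probability.
From mathcomp Require Import measurable_realfun.
From mathcomp Require Import lra.
From Stdlib Require List.
Import Order.TTheory GRing.Theory Num.Theory.
Import numFieldNormedType.Exports.
Local Open Scope classical_set_scope.
Local Open Scope ring_scope.
Set Implicit Arguments.
Unset Strict Implicit.
Unset Printing Implicit Defensive.
Section S.
Context {d : measure_display} {T : measurableType d} {R : realType} (P : probability T R).

Lemma PE (A : set T) : measurable A -> P A = (fine (P A))%:E.
Proof. by move=> mA; rewrite fineK // fin_num_measure. Qed.

Lemma mpre (f : T -> R) (B : set R) : measurable_fun setT f -> measurable B -> measurable (f @^-1` B).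
Proof. by move=> mf mB; rewrite -[f @^-1` B]setTI; exact: mf. Qed.

Lemma mlt (f g : T -> R) : measurable_fun setT f -> measurable_fun setT g -> measurable [set x | f x < g x].
Proof.
move=> mf mg; have := measurable_fun_ltr mf mg measurableT (Y := [set true]).
by rewrite setTI; apply.
Qed.

Lemma mle (f g : T -> R) : measurable_fun setT f -> measurable_fun setT g -> measurable [set x | f x <= g x].
Proof.
move=> mf mg; have := measurable_fun_ler mf mg measurableT (Y := [set true]).
by rewrite setTI; apply.
Qed.

Lemma ae_point (C : set T) (Q : T -> Prop) : measurable C -> (0 < P C)%E ->
  {ae P, forall x, Q x} -> exists x, C x /\ Q x.
Proof.
move=> mC PC [N [mN PN sN]].
apply: contrapT => hn.
have : C `<=` N.
  move=> x Cx; apply: sN => Qx; apply: hn; by exists x.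
move=> CN; have := subset_measure0 mC mN CN PN.
by move=> h; move: PC; rewrite h ltxx.
Qed.

End S.
Section S2.
Context {d : measure_display} {T : measurableType d} {R : realType} (P : probability T R).

Lemma sum_zero (l : seq (set T)) (f : set T -> R) x :
  (forall B, List.In B l -> ~ B x) -> \sum_(A <- l) f A * \1_A x = 0.
Proof.
elim: l => [|A l IH] h; first by rewrite big_nil.
rewrite big_cons IH; last by move=> B hB; apply: h; right.
by rewrite indicE memNset ?mulr0 ?addr0 //; apply: h; left.
Qed.

Lemma sum_part (l : seq (set T)) (f : set T -> R) x A0 :
  List.NoDup l -> (forall A B, List.In A l -> List.In B l -> A <> B -> A `&` B = set0) ->
  List.In A0 l -> A0 x -> \sum_(A <- l) f A * \1_A x = f A0.
Proof.
elim: l => [|A l IH] //= /List.NoDup_cons_iff[nA nd] dis inA A0x; rewrite big_cons.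
case: inA => [eA|inl].
  subst A0; rewrite sum_zero ?addr0; last first.
    move=> B hB Bx; have AB : A <> B by move=> eAB; apply: nA; rewrite eAB.
    have := dis A B (or_introl erefl) (or_intror hB) AB.
    by move=> e; have : (A `&` B) x by []; rewrite e.
  by rewrite indicE mem_set // mulr1.
have AA0 : A <> A0 by move=> e; apply: nA; rewrite e.
have hA : ~ A x.
  move=> Ax; have := dis A A0 (or_introl erefl) (or_intror inl) AA0.
  by move=> e; have : (A `&` A0) x by []; rewrite e.
rewrite indicE memNset // mulr0 add0r IH //.
by move=> B C hB hC; apply: dis; right.
Qed.

Definition pr (A : set T) : R := fine (P A).

Lemma pr_ge0 A : 0 <= pr A.
Proof. by rewrite /pr fine_ge0. Qed.

Lemma prE A : measurable A -> P A = (pr A)%:E.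
Proof. by move=> mA; rewrite /pr fineK // fin_num_measure. Qed.

Lemma pr_le1 A : measurable A -> pr A <= 1.
Proof. by move=> mA; rewrite -lee_fin -prE // probability_le1. Qed.

Lemma prT : pr setT = 1.
Proof. by rewrite /pr probability_setT. Qed.

Lemma pr_le A B : measurable A -> measurable B -> A `<=` B -> pr A <= pr B.
Proof. by move=> mA mB AB; rewrite -lee_fin -!prE // le_measure ?inE. Qed.

Lemma half_sub : nonatomic P -> forall A, measurable A -> 0 < pr A ->
  exists B, [/\ measurable B, B `<=` A, 0 < pr B & pr B <= pr A / 2].
Proof.
move=> na A mA pA.
have pA' : (0 < P A)%E by rewrite prE // lte_fin.
have [B [mB BA pB pBA]] := na A mA pA'.
move: pB pBA; rewrite !prE // !lte_fin => pB pBA.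
have [h|h] := leP (pr B) (pr A / 2); first by exists B.
have e : pr (A `\` B) = pr A - pr B.
  rewrite /pr measureD // ?setIidr // ?fineB ?fin_num_measure //.
  by rewrite -ge0_fin_numE ?measure_ge0 // fin_num_measure.
exists (A `\` B); rewrite e subr_gt0; split => //; first exact: measurableD.
lra.
Qed.

Lemma small_sub : nonatomic P -> forall A, measurable A -> 0 < pr A ->
  forall e, 0 < e -> exists B, [/\ measurable B, B `<=` A, 0 < pr B & pr B <= e].
Proof.
move=> na A mA pA.
have hk : forall k, exists B, [/\ measurable B, B `<=` A, 0 < pr B & pr B <= pr A / (2 ^+ k)].
  elim=> [|k [B [mB BA pB pBk]]]; first by exists A; split => //; rewrite expr0 divr1.
  have [C [mC CB pC pCB]] := half_sub na mB pB.
  exists C; split => //; first exact: subset_trans CB BA.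
  apply: (le_trans pCB); rewrite exprS invfM mulrA mulrAC.
  by apply: ler_wpM2r => //; rewrite invr_ge0.
move=> e e0.
pose k := Num.truncn (e^-1).
have [B [mB BA pB pBk]] := hk k.+1.
exists B; split => //; apply: (le_trans pBk).
have ei : 0 <= e^-1 by rewrite invr_ge0 ltW.
have h1 : e^-1 < k.+1%:R by have := Num.Theory.truncn_itv ei; case/andP.
have h2 : (k.+1%:R : R) <= 2 ^+ k.+1.
  by rewrite -natrX ler_nat; apply: ltnW; apply: ltn_expl.
have h3 : e^-1 < 2 ^+ k.+1 by exact: lt_le_trans h1 h2.
rewrite ler_pdivrMr ?exprn_gt0 //.
apply: (le_trans (pr_le1 mA)).
rewrite -(@ler_pM2l _ e^-1) ?invr_gt0 // mulr1 mulrA mulVf ?gt_eqF // mul1r.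
exact: ltW.
Qed.

End S2.
Section S3.
Context {d : measure_display} {T : measurableType d} {R : realType} (P : probability T R).

Lemma bnd_of (f : T -> R) (A : set T) K : (forall x, A x -> `|f x| <= K) ->
  [bounded f x | x in A].
Proof.
move=> h; rewrite /bounded_near.
exists K; split; first by rewrite num_real.
move=> M0 KM0 x Ax /=; apply: (le_trans (h x Ax)); exact: ltW.
Qed.

Lemma int_bnd (f : T -> R) (A : set T) K : measurable A -> measurable_fun setT f ->
  (forall x, A x -> `|f x| <= K) -> P.-integrable A (EFin \o f).
Proof.
move=> mA mf h; apply: measurable_bounded_integrable => //.
- by rewrite -ge0_fin_numE ?measure_ge0 // fin_num_measure.
- exact: measurable_funS mf.
- exact: bnd_of h.
Qed.

Definition Sset (f : T -> R) (A : set T) : set R :=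
  [set c | P (A `&` [set x | c < f x]) = 0%E].
Definition U (f : T -> R) (A : set T) : R := inf (Sset f A).

Variables (f : T -> R) (M : R).
Hypotheses (mf : measurable_fun setT f) (hM : {ae P, forall x, `|f x| <= M}).

Lemma mS A c : measurable A -> measurable (A `&` [set x | c < f x]).
Proof. by move=> mA; apply: measurableI => //; apply: mlt. Qed.

Lemma S_M A : measurable A -> Sset f A M.
Proof.
move=> mA; case: hM => N [mN PN sN].
apply: (subset_measure0 (mS _ mA) mN) PN => x [_ /= Mx]; apply: sN => /= h.
by move: (le_lt_trans h Mx); rewrite ltNge ler_norm.
Qed.

Lemma S_lb A : measurable A -> (0 < P A)%E -> forall c, Sset f A c -> -M <= c.
Proof.
move=> mA pA c Sc; rewrite leNgt; apply/negP => cM.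
case: hM => N [mN PN sN].
have : P.-negligible A.
  apply: (@negligibleS _ _ _ _ ((A `&` [set x | c < f x]) `|` N)).
    move=> x Ax; have [h|h] := ltP c (f x); first by left.
    right; apply: sN => /= hx; move: hx; rewrite ler_norml => /andP[h1 _].
    by move: (lt_le_trans cM h1); rewrite ltNge h.
  apply: negligibleU; first by exists (A `&` [set x | c < f x]); split => //; exact: mS.
  by exists N; split.
move=> /(measure_negligible mA) h; by move: pA; rewrite h ltxx.
Qed.

Lemma S_hasinf A : measurable A -> (0 < P A)%E -> has_inf (Sset f A).
Proof.
move=> mA pA; split; first by exists M; exact: S_M.
by exists (-M) => c; apply: S_lb.
Qed.

Lemma U_le A c : measurable A -> (0 < P A)%E -> Sset f A c -> U f A <= c.
Proof. by move=> mA pA Sc; apply: ge_inf => //; case: (S_hasinf mA pA). Qed.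

Lemma U_ge A : measurable A -> (0 < P A)%E -> -M <= U f A.
Proof.
move=> mA pA; apply: lb_le_inf; first by exists M; exact: S_M.
by move=> c; apply: S_lb.
Qed.

Lemma U_leM A : measurable A -> (0 < P A)%E -> U f A <= M.
Proof. by move=> mA pA; apply: U_le => //; exact: S_M. Qed.

Lemma U_ae A : measurable A -> (0 < P A)%E -> {ae P, forall x, A x -> f x <= U f A}.
Proof.
move=> mA pA.
have h : forall n : nat, {ae P, forall x, A x -> f x <= U f A + (n.+1%:R)^-1}.
  move=> n; have en : 0 < (n.+1%:R : R)^-1 by rewrite invr_gt0 ltr0Sn.
  have [c Sc cU] := inf_adherent en (S_hasinf mA pA).
  exists (A `&` [set x | c < f x]); split => //; first exact: mS.
  move=> x /= /not_implyP [Ax hx]; split => //.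
  by rewrite (lt_trans cU) // ltNge; apply/negP.
apply: filterS (ae_foralln h) => x hx Ax.
rewrite leNgt; apply/negP => fU.
have e0 : 0 < f x - U f A by rewrite subr_gt0.
pose n := Num.truncn ((f x - U f A)^-1).
have := hx n Ax.
have ei : 0 <= (f x - U f A)^-1 by rewrite invr_ge0 ltW.
have h1 : (f x - U f A)^-1 < n.+1%:R by have := Num.Theory.truncn_itv ei; case/andP.
rewrite -lerBlDl.
have : (n.+1%:R)^-1 < f x - U f A.
  rewrite -(@ltr_pM2l _ (f x - U f A)^-1) ?invr_gt0 // mulVf ?gt_eqF //.
  by rewrite -(@ltr_pM2r _ n.+1%:R) ?ltr0Sn // -mulrA mulVf ?mulr1 ?mul1r // pnatr_eq0.
by move=> /lt_le_trans h2 /h2; rewrite ltxx.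
Qed.

Lemma U_mono A B : measurable A -> measurable B -> B `<=` A -> (0 < P B)%E ->
  U f B <= U f A.
Proof.
move=> mA mB BA pB; apply: lb_le_inf; first by exists M; exact: S_M.
move=> c Sc; apply: U_le => //.
apply: (subset_measure0 (mS _ mB) (mS _ mA)) Sc.
by move=> x [Bx h]; split => //; apply: BA.
Qed.

End S3.
Section S4.
Context {d : measure_display} {T : measurableType d} {R : realType} (P : probability T R).

Lemma nonempty_pos (B : set T) : (0 < P B)%E -> exists x, B x.
Proof.
move=> pB; apply: contrapT => h.
have B0 : B = set0 by apply/seteqP; split => // y By; apply: h; exists y.
by move: pB; rewrite B0 measure0 ltxx.
Qed.

Lemma part2 (B : set T) : measurable B -> (0 < P B)%E -> (0 < P (~` B))%E ->
  is_partition P [:: B; ~` B].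
Proof.
move=> mB pB pC; split.
- move=> A [<-|[<-|[]]]; split => //; exact: measurableC.
- have [x Bx] := nonempty_pos pB.
  constructor; last by constructor; [by case|constructor].
  case => // e; have : (~` B) x by rewrite -e.
  by [].
- move=> A1 A2 [<-|[<-|[]]] [<-|[<-|[]]] // _; by rewrite ?setICr ?setICl.
- move=> x; case: (pselect (B x)) => h.
    by exists B; split => //; left.
  by exists (~` B); split => //; right; left.
Qed.

Lemma part1 : is_partition P [:: setT].
Proof.
split.
- by move=> A [<-|[]]; split => //; rewrite probability_setT lte01.
- by constructor; [by case|constructor].
- by move=> A1 A2 [<-|[]] [<-|[]].
- by move=> x; exists setT; split => //; left.
Qed.

Lemma condexp_at (pi : seq (set T)) (X : T -> R) x A : is_partition P pi ->
  List.In A pi -> A x ->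
  condexp_part P X pi x = fine (\int[P]_(y in A) (X y)%:E) / fine (P A).
Proof.
by case => _ nd dis _ inA Ax; rewrite /condexp_part (sum_part _ nd dis inA Ax).
Qed.

Lemma mnorm (X : T -> R) : measurable_fun setT X -> measurable_fun setT (fun x => `|X x|).
Proof. by move=> mX; apply: measurableT_comp => //; exact: normr_measurable. Qed.

Lemma negT : ~ P.-negligible setT.
Proof.
move=> /(measure_negligible measurableT) h.
have h1 := probability_setT P.
have : (0 < P setT)%E by rewrite h1 lte01.
by rewrite h ltxx.
Qed.

Lemma pos_of_nonneg (A : set T) : measurable A -> ~ (P A = 0) -> (0 < P A)%E.
Proof.
move=> mA h; rewrite lt_neqAle measure_ge0 andbT; apply/eqP => e; exact: h (esym e).
Qed.

End S4.
Section S5.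
Context {d : measure_display} {T : measurableType d} {R : realType} (P : probability T R).

Lemma dir1 (X Y0 : T -> R) : nonatomic P -> measurable_fun setT X ->
  measurable_fun setT Y0 ->
  (forall pi, is_partition P pi ->
     {ae P, forall x, `|condexp_part P X pi x - X x| <= Y0 x}) ->
  in_Linfty P X.
Proof.
move=> na mX mY H; split => //; apply: contrapT => nb.
pose G (K : R) := [set x | `|X x| <= K] `&` [set x | Y0 x <= K].
have mG K : measurable (G K).
  by apply: measurableI; apply: mle => //; try exact: mnorm; exact: measurable_cst.
have [k pG] : exists k : nat, (0 < P (G k%:R))%E.
  apply: contrapT => h.
  have : P.-negligible (\bigcup_k G k%:R).
    apply: negligible_bigcup => k; exists (G k%:R); split => //.
    apply/eqP; rewrite eq_le measure_ge0 andbT leNgt; apply/negP => hk.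
    by apply: h; exists k.
  have -> : \bigcup_k G k%:R = setT.
    apply/seteqP; split => // x _.
    pose m := `|X x| + `|Y0 x|.
    have m0 : 0 <= m by rewrite addr_ge0.
    have := Num.Theory.truncn_itv m0; case/andP => _ hm.
    exists (Num.truncn m).+1 => //; split => /=.
      by apply: ltW; apply: le_lt_trans hm; rewrite /m lerDl.
    apply: ltW; apply: le_lt_trans hm; apply: le_trans (ler_norm _) _.
    by rewrite /m lerDr.
  exact: negT.
set K := (k%:R : R).
have K0 : 0 <= K by rewrite /K ler0n.
pose n := 5 * K + 1.
pose E (m : nat) (s : R) := [set x | n < s * X x] `&` [set x | s * X x <= m%:R].
have mE m s : measurable (E m s).
  apply: measurableI; [apply: mlt|apply: mle] => //;
    try exact: measurable_cst; apply: measurable_funM => //; exact: measurable_cst.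
have [m [s [hs pE]]] : exists m s, (s = 1 \/ s = -1) /\ (0 < P (E m s))%E.
  apply: contrapT => h; apply: nb; exists n.
  have h0 m s : (s = 1 \/ s = -1) -> P (E m s) = 0.
    move=> hs; apply/eqP; rewrite eq_le measure_ge0 andbT leNgt; apply/negP => hk.
    by apply: h; exists m, s.
  apply: (@negligibleS _ _ _ _ (\bigcup_m (E m 1 `|` E m (-1)))).
    move=> x /= hx; have hx' : n < `|X x| by rewrite ltNge; apply/negP.
    have ax : 0 <= `|X x| by [].
    have := Num.Theory.truncn_itv ax; case/andP => _ hm.
    exists (Num.truncn `|X x|).+1 => //.
    have [x0|x0] := leP 0 (X x).
      have ex : 1 * X x = `|X x| by rewrite mul1r ger0_norm.
      by left; split; rewrite /= ex //; exact: ltW.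
    have ex : -1 * X x = `|X x| by rewrite mulN1r ltr0_norm.
    by right; split; rewrite /= ex //; exact: ltW.
  apply: negligible_bigcup => m; apply: negligibleU.
    by exists (E m 1); split => //; apply: h0; left.
  by exists (E m (-1)); split => //; apply: h0; right.
have pE' : 0 < pr P (E m s) by rewrite -lte_fin -prE.
have q4 : (0:R) < 4^-1 by rewrite invr_gt0.
have [D [mD DE pD pD4]] := small_sub na (mE m s) pE' q4.
have pGk : 0 < pr P (G K) by rewrite -lte_fin -prE.
have [C [mC CG pC pCD]] := small_sub na (mG K) pGk pD.
have sabs y : `|s * y| = `|y| by case: hs => ->; rewrite ?mul1r ?mulN1r ?normrN.
have Dabs y : D y -> `|X y| = s * X y /\ n < s * X y /\ s * X y <= m%:R.
  move=> Dy; have [h1 h2] := DE y Dy; split => //.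
  rewrite -(sabs (X y)) ger0_norm //; apply: ltW; apply: le_lt_trans h1.
  by rewrite /n addr_ge0 // mulr_ge0.
have dCD : C `&` D = set0.
  apply/seteqP; split => // y [Cy Dy]; have [h1 _] := CG y Cy.
  have [h2 [h3 _]] := Dabs y Dy; move: h1; rewrite /= h2 => h1.
  have : n <= K by apply: ltW; apply: lt_le_trans h3 h1.
  by rewrite /n; lra.
pose B := C `|` D.
have mB : measurable B by exact: measurableU.
have prB : pr P B = pr P C + pr P D.
  by rewrite /pr /B (measureU P mC mD dCD) fineD // fin_num_measure.
have pB : (0 < P B)%E by rewrite prE // lte_fin prB addr_gt0.
have pCB : (0 < P (~` B))%E.
  rewrite probability_setC // prE // -EFinB lte_fin subr_gt0.
  rewrite prB; lra.
have hp := part2 mB pB pCB.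
have pC' : (0 < P C)%E by rewrite prE // lte_fin.
have [x [Cx hx]] := ae_point mC pC' (H _ hp).
have Bx : B x by left.
rewrite (condexp_at X hp (or_introl erefl) Bx) in hx.
set I := fine (\int[P]_(y in B) (X y)%:E) in hx.
have eI : I = Rintegral P B X by [].
have [hXx hYx] := CG x Cx.
have hI : `|I / pr P B| <= 2 * K.
  have := ler_normD (I / pr P B - X x) (X x); rewrite subrK => h.
  apply: le_trans h _; rewrite -/(pr P B) in hx.
  move: hx hXx hYx; rewrite /= => hx hXx hYx; lra.
have bB y : B y -> `|X y| <= K + m%:R.
  case => [Cy|Dy]; first by have [h _] := CG y Cy; apply: le_trans h _; rewrite lerDl.
  by have [h1 [_ h2]] := Dabs y Dy; rewrite h1; apply: le_trans h2 _; rewrite lerDr.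
have ms : measurable_fun setT (fun y => s * X y).
  by apply: measurable_funM => //; exact: measurable_cst.
have iB : P.-integrable B (EFin \o X) := int_bnd P mB mX bB.
have iBs : P.-integrable B (EFin \o (fun y => s * X y)).
  by apply: (int_bnd P mB ms) => y By; rewrite sabs; exact: bB.
have e1 : Rintegral P B (fun y => s * X y) = s * I by rewrite eI RintegralZl.
have dj : [disjoint C & D] by rewrite disj_set2E dCD.
have e2 := Rintegral_setU mC mD iBs dj.
have iCs : P.-integrable C (EFin \o (fun y => s * X y)).
  apply: (int_bnd P mC ms) => y Cy; rewrite sabs; have [h _] := CG y Cy; exact: h.
have iDs : P.-integrable D (EFin \o (fun y => s * X y)).
  apply: (int_bnd P mD ms) => y Dy; rewrite sabs; have [h _] := DE y Dy.
  have [h1 [_ h2]] := Dabs y Dy; rewrite h1; exact: h2.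
have iC0 : P.-integrable C (EFin \o (fun _ : T => - K)).
  by apply: (int_bnd (K := K) P mC (measurable_cst _)) => y _; rewrite normrN ger0_norm.
have iD0 : P.-integrable D (EFin \o (fun _ : T => n)).
  by apply: (int_bnd (K := `|n|) P mD (measurable_cst _)) => y _.
have h3 : Rintegral P C (fun _ => - K) <= Rintegral P C (fun y => s * X y).
  apply: le_Rintegral => // y Cy; have [h _] := CG y Cy.
  by move: h; rewrite /= -(sabs (X y)) ler_norml => /andP[].
have h4 : Rintegral P D (fun _ => n) <= Rintegral P D (fun y => s * X y).
  apply: le_Rintegral => // y Dy; have [_ [h _]] := Dabs y Dy; exact: ltW.
rewrite Rintegral_cst // in h3; rewrite Rintegral_cst // in h4.
rewrite -/(pr P C) in h3; rewrite -/(pr P D) in h4.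
have hsI : s * I <= `|I| by rewrite -(sabs I) ler_norm.
have prB0 : 0 < pr P B by rewrite prB addr_gt0.
have iB0 : 0 < (pr P B)^-1 by rewrite invr_gt0.
move: hI; rewrite normrM (gtr0_norm iB0).
rewrite ler_pdivrMr // => hI.
have hKC : K * pr P C <= K * pr P D by apply: ler_wpM2l => //; exact: ltW.
have hKD : 0 < pr P D by [].
move: e1 e2 h3 h4 hsI hI hKC; rewrite prB /n; nra.
Qed.
End S5.
Section S6.
Context {d : measure_display} {T : measurableType d} {R : realType} (P : probability T R).
Variables (X : T -> R) (M : R).
Hypotheses (mX : measurable_fun setT X) (hM : {ae P, forall x, `|X x| <= M}).

Definition Xn := fun x => - X x.

Lemma mXn : measurable_fun setT Xn.
Proof. exact: measurable_funN. Qed.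

Lemma hMn : {ae P, forall x, `|Xn x| <= M}.
Proof. by apply: filterS hM => x; rewrite /Xn normrN. Qed.

Definition osc (A : set T) := U P X A + U P Xn A.
Definition Yf (pi : seq (set T)) x := \sum_(A <- pi) osc A * \1_A x.

Lemma aeA A : measurable A -> (0 < P A)%E ->
  {ae P, forall x, A x -> - U P Xn A <= X x <= U P X A}.
Proof.
move=> mA pA; have h1 := U_ae mX hM mA pA; have h2 := U_ae mXn hMn mA pA.
apply: filterS2 h1 h2 => x h1 h2 Ax; rewrite h1 // andbT lerNl; exact: h2.
Qed.

Lemma lu A : measurable A -> (0 < P A)%E -> - U P Xn A <= U P X A.
Proof.
move=> mA pA; have [x [Ax /(_ Ax) /andP[h1 h2]]] := ae_point mA pA (aeA mA pA).
exact: le_trans h1 h2.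
Qed.

Lemma osc_ge0 A : measurable A -> (0 < P A)%E -> 0 <= osc A.
Proof. by move=> mA pA; have := lu mA pA; rewrite /osc; lra. Qed.

Lemma osc_le A : measurable A -> (0 < P A)%E -> osc A <= 2 * M.
Proof.
move=> mA pA; have := U_leM mX hM mA pA; have := U_leM mXn hMn mA pA.
by rewrite /osc; lra.
Qed.

Lemma osc_mono A B : measurable A -> measurable B -> B `<=` A -> (0 < P B)%E ->
  osc B <= osc A.
Proof.
move=> mA mB BA pB; rewrite /osc; apply: lerD.
  exact: (U_mono mX hM mA mB BA pB).
exact: (U_mono mXn hMn mA mB BA pB).
Qed.

Lemma Ebnd A : measurable A -> (0 < P A)%E ->
  - U P Xn A <= fine (\int[P]_(y in A) (X y)%:E) / fine (P A) <= U P X A.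
Proof.
move=> mA pA.
set u := U P X A; set l := - U P Xn A.
have lu' : l <= u := lu mA pA.
pose g := fun x => Num.min u (Num.max l (X x)).
have mg : measurable_fun setT g.
  apply: measurable_minr; first exact: measurable_cst.
  by apply: measurable_maxr => //; exact: measurable_cst.
have gb x : l <= g x <= u.
  by rewrite /g le_min lu' le_max lexx /= ge_min lexx.
have eq : (\int[P]_(y in A) (X y)%:E = \int[P]_(y in A) (g y)%:E)%E.
  apply: ae_eq_integral => //.
  - by apply/measurable_EFinP; exact: measurable_funS mX.
  - by apply/measurable_EFinP; exact: measurable_funS mg.
  apply: filterS (aeA mA pA) => x h Ax; have /andP[h1 h2] := h Ax.
  by rewrite /g (max_r h1) (min_r h2).
have pA' : 0 < fine (P A) by rewrite -lte_fin -prE.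
have ig : P.-integrable A (EFin \o g).
  apply: (int_bnd (K := `|l| + `|u|) P mA mg) => x _.
  have /andP[h1 h2] := gb x; rewrite ler_norml.
  have := ler_norm u; have := ler_norml l `|l|; rewrite lexx => /esym/andP[h3 _].
  move=> h4; have := normr_ge0 u; have := normr_ge0 l; move=> h5 h6; apply/andP; split; lra.
have il : P.-integrable A (EFin \o (fun _ : T => l)).
  by apply: (int_bnd (K := `|l|) P mA (measurable_cst _)) => x _.
have iu : P.-integrable A (EFin \o (fun _ : T => u)).
  by apply: (int_bnd (K := `|u|) P mA (measurable_cst _)) => x _.
have h1 : Rintegral P A (fun _ => l) <= Rintegral P A g.
  by apply: le_Rintegral => // x _; have /andP[] := gb x.
have h2 : Rintegral P A g <= Rintegral P A (fun _ => u).
  by apply: le_Rintegral => // x _; have /andP[] := gb x.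
rewrite !Rintegral_cst // in h1 h2.
rewrite eq -/(Rintegral P A g) -/l ler_pdivlMr // ler_pdivrMr //.
by rewrite h1 h2.
Qed.

Lemma ae_list (Q : set T -> T -> Prop) (l : seq (set T)) :
  (forall A, List.In A l -> {ae P, forall x, Q A x}) ->
  {ae P, forall x, forall A, List.In A l -> Q A x}.
Proof.
elim: l => [|A l IH] h; first by apply: aeW => x A [].
have h1 := h A (or_introl erefl).
have h2 := IH (fun B hB => h B (or_intror hB)).
by apply: filterS2 h1 h2 => x q1 q2 B [<-|hB] //; exact: q2.
Qed.

Lemma Y_at pi x A : is_partition P pi -> List.In A pi -> A x -> Yf pi x = osc A.
Proof. by case => _ nd dis _ inA Ax; rewrite /Yf (sum_part _ nd dis inA Ax). Qed.

Lemma Y_dom pi : is_partition P pi ->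
  {ae P, forall x, `|condexp_part P X pi x - X x| <= Yf pi x}.
Proof.
move=> hp; have hae : {ae P, forall x, forall A, List.In A pi ->
    A x -> - U P Xn A <= X x <= U P X A}.
  apply: ae_list => A hA; case: hp => hm _ _ _; have [mA pA] := hm A hA.
  exact: aeA.
apply: filterS hae => x hx.
have hp' := hp; case: hp' => hm _ _ hc; have [A [hA Ax]] := hc x.
have [mA pA] := hm A hA.
rewrite (condexp_at X hp hA Ax) (Y_at hp hA Ax) /osc.
have /andP[e1 e2] := Ebnd mA pA; have /andP[x1 x2] := hx A hA Ax.
rewrite ler_norml; apply/andP; split; lra.
Qed.

Lemma Y_ge0 pi x : is_partition P pi -> 0 <= Yf pi x.
Proof.
move=> hp; have hp' := hp; case: hp' => hm _ _ hc; have [A [hA Ax]] := hc x.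
have [mA pA] := hm A hA; rewrite (Y_at hp hA Ax); exact: osc_ge0.
Qed.

Lemma Y_le pi x : is_partition P pi -> Yf pi x <= 2 * M.
Proof.
move=> hp; have hp' := hp; case: hp' => hm _ _ hc; have [A [hA Ax]] := hc x.
have [mA pA] := hm A hA; rewrite (Y_at hp hA Ax); exact: osc_le.
Qed.

Lemma Y_dec pi pi' x : is_partition P pi -> is_partition P pi' -> refines pi pi' ->
  Yf pi' x <= Yf pi x.
Proof.
move=> hp hp' r.
have hq := hp'; case: hq => hm' _ _ hc'; have [B [hB Bx]] := hc' x.
have [A [hA BA]] := r B hB.
have hq := hp; case: hq => hm _ _ _.
have [mA pA] := hm A hA; have [mB pB] := hm' B hB.
rewrite (Y_at hp' hB Bx) (Y_at hp hA (BA x Bx)); exact: osc_mono.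
Qed.

End S6.
Section S7.
Context {d : measure_display} {T : measurableType d} {R : realType} (P : probability T R).

Lemma msum (c : set T -> R) (l : seq (set T)) : (forall A, List.In A l -> measurable A) ->
  measurable_fun setT (fun x => \sum_(A <- l) c A * \1_A x).
Proof.
elim: l => [|A l IH] h.
  by under eq_fun do rewrite big_nil; exact: measurable_cst.
under eq_fun do rewrite big_cons.
apply: measurable_funD; last by apply: IH => B hB; apply: h; right.
apply: measurable_funM; first exact: measurable_cst.
by apply: measurable_indic; apply: h; left.
Qed.

Lemma phi_lphi (Phi : R -> R) (Y : T -> R) (c : R) : orlicz_fun Phi ->
  measurable_fun setT Y -> 0 <= c -> (forall x, 0 <= Y x <= c) -> in_LPhi P Phi Y.
Proof.
case=> P0 cvx mono pos _ mY c0 hY; split => //.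
have P1 : 0 < Phi 1 := pos 1 ltr01.
pose lam := c * (Phi 1 + 1) + 1.
have lam0 : 0 < lam by rewrite /lam ltr_wpDl // mulr_ge0 // addr_ge0 // ltW.
exists lam; split => //.
pose Phi' := fun t => Phi (Num.max t 0).
have ndP : {homo Phi' : s t / s <= t}.
  move=> s t st; rewrite /Phi'; apply: mono; first by rewrite le_max lexx orbT.
  by rewrite ge_max le_max st /= le_max lexx orbT.
have mPhi : measurable_fun setT (fun x => Phi (`|Y x| / lam)).
  have -> : (fun x => Phi (`|Y x| / lam)) = Phi' \o (fun x => `|Y x| / lam).
    apply/funext => x; rewrite /Phi' /= max_l //.
    exact: (divr_ge0 (normr_ge0 _) (ltW lam0)).
  have m1 : measurable_fun setT (fun x => `|Y x| / lam).
    by apply: measurable_funM; [exact: mnorm|exact: measurable_cst].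
  have m2 : measurable_fun setT Phi' := nondecreasing_measurable measurableT ndP.
  exact: (measurableT_comp m2 m1).
have hb x : 0 <= Phi (`|Y x| / lam) <= 1.
  have t0 : 0 <= `|Y x| / lam := divr_ge0 (normr_ge0 _) (ltW lam0).
  have /andP[y0 yc] := hY x.
  have tc : `|Y x| / lam <= c / lam by rewrite ler_pM2r ?invr_gt0 // ger0_norm.
  have t1 : c / lam <= 1.
    rewrite ler_pdivrMr // mul1r /lam; have : 0 <= c * Phi 1 by rewrite mulr_ge0 // ltW.
    rewrite mulrDr mulr1; lra.
  apply/andP; split; first by rewrite -P0; apply: mono.
  set t := `|Y x| / lam.
  have := cvx 1 0 t ler01 (lexx 0); rewrite t0 (le_trans tc t1) => /(_ isT).
  rewrite mulr1 mulr0 addr0 P0 mulr0 addr0 => h; apply: le_trans h _.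
  have : t * Phi 1 <= c / lam * Phi 1 by rewrite ler_pM2r.
  move=> h; apply: le_trans h _.
  rewrite mulrAC ler_pdivrMr // mul1r /lam mulrDr mulr1.
  have : 0 <= c by []; lra.
apply: (@le_trans _ _ (\int[P]_x (cst (1%R%:E) x))%E).
  apply: ge0_le_integral => //; try (by move=> x _; rewrite /= lee_fin; have /andP[] := hb x);
    try exact/measurable_EFinP; exact: measurable_cst.
by rewrite integral_cst // mul1e; exact: probability_le1.
Qed.

End S7.
Section S8.
Context {d : measure_display} {T : measurableType d} {R : realType} (P : probability T R).
Variables (X : T -> R) (M : R).
Hypotheses (mX : measurable_fun setT X) (hM : {ae P, forall x, `|X x| <= M}).

Lemma small_inv (a : R) : 0 < a -> exists k : nat, (k.+1%:R)^-1 < a.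
Proof.
move=> a0; exists (Num.truncn (a^-1)).
have ei : 0 <= a^-1 by rewrite invr_ge0 ltW.
have h1 : a^-1 < (Num.truncn a^-1).+1%:R by have := Num.Theory.truncn_itv ei; case/andP.
rewrite -(@ltr_pM2l _ a^-1) ?invr_gt0 // mulVf ?gt_eqF //.
by rewrite -(@ltr_pM2r _ (Num.truncn a^-1).+1%:R) ?ltr0Sn // -mulrA mulVf ?mulr1 ?mul1r // pnatr_eq0.
Qed.

Lemma Y_inf (Z : T -> R) : measurable_fun setT Z ->
  (forall pi, is_partition P pi -> {ae P, forall x, Z x <= Yf P X pi x}) ->
  {ae P, forall x, Z x <= 0}.
Proof.
move=> mZ H.
have hk : forall k : nat, {ae P, forall x, Z x <= (k.+1%:R)^-1}.
  move=> k; set e : R := (k.+1%:R)^-1.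
  have e0 : 0 < e by rewrite invr_gt0 ltr0Sn.
  pose E := [set x | e < Z x].
  have mE : measurable E by apply: mlt => //; exact: measurable_cst.
  case: (pselect (P E = 0)) => [E0|E0].
    exists E; split => // x /= /negP; rewrite -ltNge; exact.
  exfalso; have pE := pos_of_nonneg mE E0.
  pose J (j : nat) (s : R) := [set x | j%:R * e <= s * X x] `&` [set x | s * X x <= j%:R * e + e].
  have mJ j s : measurable (J j s).
    apply: measurableI; apply: mle => //; try exact: measurable_cst;
      try (apply: measurable_funM => //; exact: measurable_cst).
  have [j [s [hs pJ]]] : exists j s, (s = 1 \/ s = -1) /\ (0 < P (E `&` J j s))%E.
    apply: contrapT => h.
    have h0 j s : (s = 1 \/ s = -1) -> P (E `&` J j s) = 0.
      move=> hs; apply/eqP; rewrite eq_le measure_ge0 andbT leNgt; apply/negP => hk.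
      by apply: h; exists j, s.
    have : P.-negligible E.
      apply: (@negligibleS _ _ _ _ (\bigcup_j ((E `&` J j 1) `|` (E `&` J j (-1))))).
        move=> x Ex.
        have ax : 0 <= `|X x| / e by rewrite divr_ge0 // ltW.
        have := Num.Theory.truncn_itv ax; case/andP.
        rewrite ler_pdivlMr // ltr_pdivrMr // => h1 h2.
        exists (Num.truncn (`|X x| / e)) => //.
        have h3 : `|X x| <= (Num.truncn (`|X x| / e))%:R * e + e.
          by apply: ltW; move: h2; rewrite -natr1 mulrDl mul1r.
        have [x0|x0] := leP 0 (X x).
          have ex : 1 * X x = `|X x| by rewrite mul1r ger0_norm.
          by left; split => //; split; rewrite /= ex.
        have ex : -1 * X x = `|X x| by rewrite mulN1r ltr0_norm.
        by right; split => //; split; rewrite /= ex.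
      apply: negligible_bigcup => i; apply: negligibleU.
        exists (E `&` J i 1); split => //; first exact: measurableI.
        by apply: h0; left.
      exists (E `&` J i (-1)); split => //; first exact: measurableI.
      by apply: h0; right.
    by move=> /(measure_negligible mE).
  pose S := J j s.
  have osc_small A : measurable A -> (0 < P A)%E -> P (A `&` ~` S) = 0 ->
      osc P X A <= e.
    move=> mA pA AS.
    have mAS : measurable (A `&` ~` S) by apply: measurableI; [exact: mA | apply: measurableC; exact: mJ].
    have key (f : T -> R) (c : R) : measurable_fun setT f ->
        (forall x, c < f x -> ~ S x) -> Sset P f A c.
      move=> mf hf; apply: (subset_measure0 _ mAS) AS.
        by apply: measurableI => //; apply: mlt => //; exact: measurable_cst.
      by move=> x [Ax /hf]; split.
    rewrite /osc; case: hs => es.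
    - have h1 : U P X A <= j%:R * e + e.
        apply: (U_le mX hM mA pA); apply: key => // x hx [_]; rewrite /= es mul1r.
        by move: hx; lra.
      have h2 : U P (Xn X) A <= - (j%:R * e).
        apply: (U_le (mXn mX) (hMn hM) mA pA); apply: key; first exact: mXn.
        move=> x hx [hh _]; move: hh hx; rewrite /= es mul1r /Xn => hh hx.
        by move: hh hx; lra.
      by lra.
    - have h1 : U P X A <= - (j%:R * e).
        apply: (U_le mX hM mA pA); apply: key => // x hx [hh _]; move: hh hx.
        by rewrite /= es mulN1r => hh hx; move: hh hx; lra.
      have h2 : U P (Xn X) A <= j%:R * e + e.
        apply: (U_le (mXn mX) (hMn hM) mA pA); apply: key; first exact: mXn.
        move=> x hx [_]; move: hx; rewrite /= es mulN1r /Xn => hx hh.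
        by move: hh hx; lra.
      by lra.
  have mS : measurable S by exact: mJ.
  have pS : (0 < P S)%E.
    apply: (lt_le_trans pJ); apply: le_measure; rewrite ?inE //.
    exact: measurableI.
  case: (pselect (P (~` S) = 0)) => [C0|C0].
    have [x [Ex hx]] := ae_point mE pE (H _ (part1 P)).
    rewrite (Y_at X (part1 P) (or_introl erefl) (I : setT x)) in hx.
    have : osc P X setT <= e.
      apply: osc_small => //; first by rewrite probability_setT lte01.
      by rewrite setTI.
    by move: Ex => /= Ex h; move: (lt_le_trans Ex (le_trans hx h)); rewrite ltxx.
  have pC := pos_of_nonneg (measurableC mS) C0.
  have hp := part2 mS pS pC.
  have mES : measurable (E `&` S) by exact: measurableI.
  have [x [[Ex Sx] hx]] := ae_point mES pJ (H _ hp).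
  rewrite (Y_at X hp (or_introl erefl) Sx) in hx.
  have : osc P X S <= e.
    by apply: osc_small => //; rewrite setICr measure0.
  by move: Ex => /= Ex h; move: (lt_le_trans Ex (le_trans hx h)); rewrite ltxx.
apply: filterS (ae_foralln hk) => x hx; rewrite leNgt; apply/negP => Zx.
have [k hk'] := small_inv Zx.
by move: (lt_le_trans hk' (hx k)); rewrite ltxx.
Qed.

End S8.

Unset Implicit Arguments.
Set Strict Implicit.

Theorem proposition3p3 (d : measure_display) (T : measurableType d)
  (R : realType) (P : probability T R) (Phi : R -> R) (X : T -> R) :
  nonatomic P -> orlicz_fun Phi -> in_LPhi P Phi X ->
  (order_conv P Phi (is_partition P) refines (condexp_part P X) X
   <-> in_Linfty P X).
Proof.
move=> na oPhi [mX _]; split.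
- case=> Y [hY1 hY2 hY3 hY4 hY5].
  have p1 := part1 P.
  apply: (dir1 (Y0 := Y [:: setT])) na mX _ _.
    by case: (hY1 _ p1).
  move=> pi hp; have h1 := hY5 pi hp.
  have rT : refines [:: setT] pi by move=> B _; exists setT; split => //; left.
  have h2 := hY2 _ _ p1 hp rT.
  by apply: filterS2 h1 h2 => x a b; apply: le_trans a b.
- case=> _ [M hM].
  have pT : (0 < P setT)%E by rewrite probability_setT lte01.
  have [x0 _] := nonempty_pos pT.
  exists (Yf P X); split.
  + move=> pi hp; apply: (phi_lphi P (c := 2 * M)) => //.
    * rewrite /Yf; apply: msum => A hA; case: hp => hm _ _ _.
      by case: (hm A hA).
    * exact: le_trans (Y_ge0 mX hM x0 hp) (Y_le mX hM x0 hp).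
    * by move=> x; rewrite (Y_ge0 mX hM x hp) (Y_le mX hM x hp).
  + by move=> i j hi hj r; apply: aeW => x; exact: (Y_dec mX hM x hi hj r).
  + by move=> i hi; apply: aeW => x; exact: (Y_ge0 mX hM x hi).
  + by move=> Z [mZ _] hZ; exact: (Y_inf mX hM mZ hZ).
  + by move=> i hi; exact: (Y_dom mX hM hi).
Qed.
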